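(* Let $L_1\subseteq T^\omega_{\Sigma_1}$ and $L_2\subseteq T^\omega_{\Sigma_2}$ be regular tree languages, and let $F:\Sigma_1^*\to\Sigma_2$ be a function definable by a Moore machine. Assume that for every $t\in T^\omega_{\Sigma_1}$, $t\in L_1$ iff $\widehat{F}(t)\in L_2$. Then $da(L_1)\le da(L_2)$.
   Context: $T^\omega_\Sigma$ is the set of trees $t:\{l,r\}^*\to\Sigma$. A Moore machine $M=(\Sigma,\Gamma,Q,q_I,\delta,out)$ has finite state set $Q$, initial state $q_I$, transition function $\delta:Q\times\Sigma\to Q$ and output $out:Q\to\Gamma$; $\widehat\delta(\epsilon)=q_I$, $\widehat\delta(w a)=\delta(\widehat\delta(w),a)$; $F:\Sigma^*\to\Gamma$ is definable by $M$ if $F(w)=out(\widehat\delta(w))$ for all $w$. For $t_1\in T^\omega_{\Sigma_1}$, $\widehat F(t_1)\in T^\omega_{\Sigma_2}$ is defined by $\widehat F(t_1)(v)=F(t_1(v_1)\cdots t_1(v_k))$ where $v_1,\dots,v_k$ is the path from the root to $v$. A parity tree automaton (PTA) $\mathcal{A}=(Q,\Sigma,Q_I,\delta,\mathbb{C})$ ($Q$ finite, $Q_I\subseteq Q$, $\delta\subseteq Q\times\Sigma\times Q\times Q$, $\mathbb{C}:Q\to\mathbb{N}$) has computations $\phi:\{l,r\}^*\to Q$ with $\phi(\epsilon)\in Q_I$, $(\phi(v),t(v),\phi(vl),\phi(vr))\in\delta$, accepting if on every branch the largest color seen infinitely often is even; $ACC(\mathcal{A},t)$ the set of accepting computations. Degree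 $da(\mathcal{A})$: $k$ if $|ACC(\mathcal{A},t)|\le k$ for all $t$ and ($k=1$ or not for $k-1$); ''finite'' if all finite but unbounded; $\aleph_0$ if all countable, not all finite; $2^{\aleph_0}$ otherwise; ordered $1<2<\dots<\text{finite}<\aleph_0<2^{\aleph_0}$. For a regular language $L$, $da(L)=\min\{da(\mathcal{A})\mid L(\mathcal{A})=L\}$. *)

(* Defs.v *)
From mathcomp Require Import all_boot.
From Stdlib Require List.
Set Implicit Arguments. Unset Strict Implicit. Unset Printing Implicit Defensive.

(* Infinite binary trees: nodes are words over {l,r}, encoded l = false, r = true. *)
Definition node := seq bool.
Definition tree (Sigma : Type) := node -> Sigma.

Record moore (Sigma Gamma : Type) := Moore {
  mm_st : finType;
  mm_init : mm_st;
  mm_delta : mm_st -> Sigma -> mm_st;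
  mm_out : mm_st -> Gamma }.

Definition mm_run Sigma Gamma (M : moore Sigma Gamma) (w : seq Sigma) : mm_st M :=
  foldl (@mm_delta _ _ M) (mm_init M) w.
Arguments mm_run {Sigma Gamma} M w.

Definition moore_definable Sigma Gamma (F : seq Sigma -> Gamma) : Prop :=
  exists M : moore Sigma Gamma, forall w, F w = mm_out (mm_run M w).

Definition path_word Sigma (t : tree Sigma) (v : node) : seq Sigma :=
  [seq t (take i v) | i <- iota 0 (size v).+1].

Definition Fhat Sigma1 Sigma2 (F : seq Sigma1 -> Sigma2) (t : tree Sigma1) : tree Sigma2 :=
  fun v => F (path_word t v).

Record PTA (Sigma : Type) := mkPTA {
  pta_st : finType;
  pta_init : pred pta_st;
  pta_delta : pta_st -> Sigma -> pta_st -> pta_st -> bool;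
  pta_col : pta_st -> nat }.

Definition branch_node (b : nat -> bool) (n : nat) : node := mkseq b n.

Definition inf_often (c : nat -> nat) (m : nat) : Prop :=
  forall N, exists n, N <= n /\ c n = m.

Definition parity_ok (c : nat -> nat) : Prop :=
  exists m, ~~ odd m /\ inf_often c m /\ (forall m', m < m' -> ~ inf_often c m').

Definition is_computation Sigma (A : PTA Sigma) (t : tree Sigma) (phi : node -> pta_st A) : Prop :=
  @pta_init _ A (phi [::]) /\
  forall v, @pta_delta _ A (phi v) (t v) (phi (rcons v false)) (phi (rcons v true)).
Arguments is_computation {Sigma} A t phi.

Definition accepting_comp Sigma (A : PTA Sigma) (t : tree Sigma) (phi : node -> pta_st A) : Prop :=
  is_computation A t phi /\
  forall b : nat -> bool, parity_ok (fun n => @pta_col _ A (phi (branch_node b n))).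
Arguments accepting_comp {Sigma} A t phi.

Definition ACC Sigma (A : PTA Sigma) (t : tree Sigma) : (node -> pta_st A) -> Prop :=
  accepting_comp A t.
Arguments ACC {Sigma} A t.

Definition accepts Sigma (A : PTA Sigma) (t : tree Sigma) : Prop :=
  exists phi, accepting_comp A t phi.
Arguments accepts {Sigma} A t.

Definition lang_of Sigma (A : PTA Sigma) (L : tree Sigma -> Prop) : Prop :=
  forall t, accepts A t <-> L t.
Arguments lang_of {Sigma} A L.

Definition regular Sigma (L : tree Sigma -> Prop) : Prop :=
  exists A : PTA Sigma, lang_of A L.

Definition card_le (X : Type) (S : X -> Prop) (k : nat) : Prop :=
  exists l : list X, (List.length l <= k)%coq_nat /\ forall x, S x -> List.In x l.

Definition finite_set (X : Type) (S : X -> Prop) : Prop :=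
  exists l : list X, forall x, S x -> List.In x l.

Definition countable_set (X : Type) (S : X -> Prop) : Prop :=
  exists g : X -> nat, forall x y, S x -> S y -> g x = g y -> x = y.

(* degrees of ambiguity: 1 < 2 < ... < finite < aleph0 < 2^aleph0 *)
Inductive degree := DFin of nat | DFinite | DAleph0 | DCont.

Definition degree_rank (d : degree) : nat :=
  match d with DFin _ => 0 | DFinite => 1 | DAleph0 => 2 | DCont => 3 end.

Definition degree_le (d1 d2 : degree) : Prop :=
  match d1, d2 with
  | DFin k1, DFin k2 => k1 <= k2
  | _, _ => degree_rank d1 <= degree_rank d2
  end.

Definition da_aut Sigma (A : PTA Sigma) (d : degree) : Prop :=
  match d with
  | DFin k => 1 <= k /\ (forall t, card_le (ACC A t) k) /\
              (k = 1 \/ ~ (forall t, card_le (ACC A t) k.-1))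
  | DFinite => (forall t, finite_set (ACC A t)) /\
               ~ (exists k, forall t, card_le (ACC A t) k)
  | DAleph0 => (forall t, countable_set (ACC A t)) /\
               ~ (forall t, finite_set (ACC A t))
  | DCont => ~ (forall t, countable_set (ACC A t))
  end.
Arguments da_aut {Sigma} A d.

Definition da_lang Sigma (L : tree Sigma -> Prop) (d : degree) : Prop :=
  (exists A : PTA Sigma, lang_of A L /\ da_aut A d) /\
  (forall (A : PTA Sigma) d', lang_of A L -> da_aut A d' -> degree_le d d').

(* Main.v *)
Require Import Defs.
From mathcomp Require Import all_boot.
From Stdlib Require Import Classical ClassicalEpsilon FunctionalExtensionality.
From Stdlib Require List.
Set Implicit Arguments. Unset Strict Implicit. Unset Printing Implicit Defensive.

Lemma card_le_mono (X : Type) (S : X -> Prop) k k' :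
  card_le S k -> k <= k' -> card_le S k'.
Proof.
move=> [l [Hl Hin]] /leP Hk; exists l; split => //.
exact: (PeanoNat.Nat.le_trans _ _ _ Hl Hk).
Qed.

Lemma card_fin (X : Type) (S : X -> Prop) k : card_le S k -> finite_set S.
Proof. by move=> [l [_ H]]; exists l. Qed.

Lemma fin_count (X : Type) (S : X -> Prop) : finite_set S -> countable_set S.
Proof.
move=> [l Hl].
exists (fun x => epsilon (inhabits 0) (fun n => List.nth_error l n = Some x)).
move=> x y Sx Sy E.
have hx : exists n, List.nth_error l n = Some x by apply: List.In_nth_error; apply: Hl.
have hy : exists n, List.nth_error l n = Some y by apply: List.In_nth_error; apply: Hl.
have ex := epsilon_spec (inhabits 0) _ hx.
have ey := epsilon_spec (inhabits 0) _ hy.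
rewrite E ey in ex. by case: ex.
Qed.

Definition embeds S1 S2 (A : PTA S1) (B : PTA S2) : Prop :=
  forall t, exists t' (f : (node -> pta_st A) -> (node -> pta_st B)) g,
    forall phi, ACC A t phi -> ACC B t' (f phi) /\ g (f phi) = phi.

Section Emb.
Variables (S1 S2 : Type) (A : PTA S1) (B : PTA S2).
Hypothesis HE : embeds A B.

Lemma emb_card k : (forall t', card_le (ACC B t') k) -> forall t, card_le (ACC A t) k.
Proof.
move=> H t; have [t' [f [g Hfg]]] := HE t.
have [l [Hl Hin]] := H t'.
exists (List.map g l); split; first by rewrite List.length_map.
move=> phi Hphi; have [H1 H2] := Hfg phi Hphi.
rewrite -H2; apply: List.in_map; exact: Hin.
Qed.

Lemma emb_fin : (forall t', finite_set (ACC B t')) -> forall t, finite_set (ACC A t).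
Proof.
move=> H t; have [t' [f [g Hfg]]] := HE t.
have [l Hin] := H t'.
exists (List.map g l).
move=> phi Hphi; have [H1 H2] := Hfg phi Hphi.
rewrite -H2; apply: List.in_map; exact: Hin.
Qed.

Lemma emb_count : (forall t', countable_set (ACC B t')) -> forall t, countable_set (ACC A t).
Proof.
move=> H t; have [t' [f [g Hfg]]] := HE t.
have [c Hc] := H t'.
exists (fun phi => c (f phi)) => x y Hx Hy E.
have [Hx1 Hx2] := Hfg x Hx; have [Hy1 Hy2] := Hfg y Hy.
by rewrite -Hx2 -Hy2 (Hc _ _ Hx1 Hy1 E).
Qed.

Lemma emb_degree dA dB : da_aut A dA -> da_aut B dB -> degree_le dA dB.
Proof.
case: dB => [kB|||] /=.
- move=> HA [HkB [HB _]].
  have HAk := emb_card HB.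
  have HAf : forall t, finite_set (ACC A t) by move=> t; apply: card_fin (HAk t).
  case: dA HA => [kA|||] /=.
  + move=> [H1 [_ [->|Hn]]] //.
    case: (leqP kA kB) => // Hlt; exfalso; apply: Hn => t.
    apply: card_le_mono (HAk t) _. by rewrite -ltnS prednK // (leq_ltn_trans _ Hlt).
  + by move=> [_ Hn]; exfalso; apply: Hn; exists kB.
  + by move=> [_ Hn]; exfalso; apply: Hn.
  + by move=> Hn; exfalso; apply: Hn => t; apply: fin_count.
- move=> HA [HB _].
  have HAf := emb_fin HB.
  case: dA HA => [kA|||] //=.
  + by move=> [_ Hn]; exfalso; apply: Hn.
  + by move=> Hn; exfalso; apply: Hn => t; apply: fin_count.
- move=> HA [HB _].
  have HAc := emb_count HB.
  case: dA HA => [kA|||] //=; by move=> Hn; exfalso; apply: Hn.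
- by case: dA.
Qed.
End Emb.

Lemma da_exists S (A : PTA S) : exists d, da_aut A d.
Proof.
case: (classic (exists k, forall t, card_le (ACC A t) k)) => [[k Hk]|Hnb].
  elim: k Hk => [|k IH] Hk.
    exists (DFin 1); split => //; split; last by left.
    by move=> t; apply: card_le_mono (Hk t) _.
  case: (ltnP k 1) => [k0|kpos].
    exists (DFin 1); split => //; split; last by left.
    by move=> t; apply: card_le_mono (Hk t) _.
  case: (classic (forall t, card_le (ACC A t) k)) => [Hk'|Hn]; first exact: IH.
  by exists (DFin k.+1); split => //; split => //; right.
case: (classic (forall t, finite_set (ACC A t))) => [Hf|Hnf].
  by exists DFinite; split.
case: (classic (forall t, countable_set (ACC A t))) => [Hc|Hnc].
  by exists DAleph0; split.
by exists DCont.
Qed.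

Lemma da_lang_exists S (L : tree S -> Prop) : regular L -> exists d, da_lang L d.
Proof.
move=> [A0 HA0].
set P := fun d => exists A : PTA S, lang_of A L /\ da_aut A d.
have mk : forall d, P d -> (forall A d', lang_of A L -> da_aut A d' -> degree_le d d') ->
   exists d, da_lang L d by move=> d Pd H; exists d; split.
case: (classic (exists k, P (DFin k))) => [[k Pk]|HnF].
  suff: forall n k, k <= n -> P (DFin k) -> exists d, da_lang L d by move=> H; apply: (H k k (leqnn k) Pk).
  elim=> [|n IH] j Hj Pj.
    apply: (mk _ Pj) => A [kk|||] //= HA Hd.
    by move: Hj; rewrite leqn0 => /eqP ->.
  case: (classic (exists i, i < j /\ P (DFin i))) => [[i [Hi Pi]]|Hn].
    by apply: (IH i) => //; rewrite -ltnS (leq_trans Hi).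
  apply: (mk _ Pj) => A [kk|||] //= HA Hd.
  case: (leqP j kk) => // Hlt; exfalso; apply: Hn; exists kk; split => //.
  by exists A.
have nF : forall A k, lang_of A L -> ~ da_aut A (DFin k)
  by move=> A k HA Hd; apply: HnF; exists k, A.
case: (classic (P DFinite)) => [Pf|Hnf].
  apply: (mk _ Pf) => A [kk|||] //= HA Hd; by case: (nF _ _ HA Hd).
case: (classic (P DAleph0)) => [Pa|Hna].
  apply: (mk _ Pa) => A [kk|||] //= HA Hd; first by case: (nF _ _ HA Hd).
  by case: Hnf; exists A.
have [d0 Hd0] := da_exists A0.
have Pc : P DCont.
  case: d0 Hd0 => [kk|||] Hd0; first by case: (nF _ _ HA0 Hd0).
  - by case: Hnf; exists A0.
  - by case: Hna; exists A0.
  - by exists A0.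
apply: (mk _ Pc) => A [kk|||] //= HA Hd; first by case: (nF _ _ HA Hd).
- by case: Hnf; exists A.
- by case: Hna; exists A.
Qed.

Lemma degree_le_trans d1 d2 d3 : degree_le d1 d2 -> degree_le d2 d3 -> degree_le d1 d3.
Proof.
case: d1 => [k1|||]; case: d2 => [k2|||]; case: d3 => [k3|||] //=.
exact: leq_trans.
Qed.

Section Prod.
Variables (S1 S2 : finType) (M : moore S1 S2) (B : PTA S2).

Definition prodA : PTA S1 :=
  @mkPTA S1 (mm_st M * pta_st B)%type
    (fun p => (p.1 == @mm_init _ _ M) && @pta_init _ B p.2)
    (fun p a pl pr => [&& pl.1 == mm_delta p.1 a, pr.1 == mm_delta p.1 a &
                        @pta_delta _ B p.2 (mm_out (mm_delta p.1 a)) pl.2 pr.2])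
    (fun p => @pta_col _ B p.2).

Definition pw (t : tree S1) (v : node) : seq S1 :=
  [seq t (take i v) | i <- iota 0 (size v)].

Definition mrun t v := mm_run M (pw t v).

Lemma path_word_pw t v : path_word t v = rcons (pw t v) (t v).
Proof.
rewrite /path_word /pw -addn1 iotaD map_cat /= add0n take_size.
by rewrite cats1.
Qed.

Lemma pw_rcons t v b : pw t (rcons v b) = path_word t v.
Proof.
rewrite /pw /path_word size_rcons; apply/eq_in_map => i.
rewrite mem_iota add0n ltnS => /andP [_ Hi].
rewrite -cats1 take_cat; case: ltnP => // Hge.
have -> : i = size v by apply/eqP; rewrite eqn_leq Hi Hge.
by rewrite subnn take0 cats0 take_size.
Qed.

Lemma mrun_nil t : mrun t [::] = @mm_init _ _ M.
Proof. by []. Qed.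

Lemma mrun_rcons t v b : mrun t (rcons v b) = mm_delta (mrun t v) (t v).
Proof. by rewrite /mrun pw_rcons path_word_pw /mm_run foldl_rcons. Qed.

Lemma prod_first t phi : is_computation prodA t phi -> forall v, (phi v).1 = mrun t v.
Proof.
move=> [Hi Hd]; elim/last_ind => [|v b IH].
  by move: Hi => /= /andP [/eqP -> _].
rewrite mrun_rcons -IH; have := Hd v => /= /and3P [/eqP H1 /eqP H2 _].
by case: b; rewrite ?H1 ?H2.
Qed.

Hypothesis F : seq S1 -> S2.
Hypothesis HF : forall w, F w = mm_out (mm_run M w).

Lemma Fhat_eq t v : Fhat F t v = mm_out (mm_delta (mrun t v) (t v)).
Proof. by rewrite /Fhat HF path_word_pw /mm_run foldl_rcons. Qed.

Lemma prod_fwd t phi : ACC prodA t phi -> ACC B (Fhat F t) (fun v => (phi v).2).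
Proof.
move=> [Hc Hp]; have Hf := prod_first Hc; case: Hc => [Hi Hd].
split; last exact: Hp.
split; first by move: Hi => /= /andP [_ ->].
move=> v; rewrite Fhat_eq -Hf; have := Hd v => /= /and3P [_ _ ->] //.
Qed.

Definition gback t (psi : node -> pta_st B) : node -> pta_st prodA :=
  fun v => (mrun t v, psi v).

Lemma prod_bwd t psi : ACC B (Fhat F t) psi -> ACC prodA t (gback t psi).
Proof.
move=> [[Hi Hd] Hp]; split; last exact: Hp.
split; first by rewrite /= eqxx Hi.
move=> v /=; rewrite !mrun_rcons; apply/and3P; split => //; try exact: eqxx.
by rewrite -Fhat_eq.
Qed.

Lemma prod_back t phi : ACC prodA t phi -> gback t (fun v => (phi v).2) = phi.
Proof.
move=> [Hc _]; apply: functional_extensionality => v.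
by rewrite /gback -(prod_first Hc v); case: (phi v).
Qed.

Lemma prod_embeds : embeds prodA B.
Proof.
move=> t; exists (Fhat F t), (fun phi v => (phi v).2), (gback t) => phi H.
by split; [apply: prod_fwd | apply: prod_back].
Qed.

Lemma prod_lang L2 : lang_of B L2 -> lang_of prodA (fun t => L2 (Fhat F t)).
Proof.
move=> HB t; rewrite -HB; split.
  by move=> [phi H]; exists (fun v => (phi v).2); apply: prod_fwd.
by move=> [psi H]; exists (gback t psi); apply: prod_bwd.
Qed.
End Prod.

Theorem lemma3p10 (Sigma1 Sigma2 : finType)
  (L1 : tree Sigma1 -> Prop) (L2 : tree Sigma2 -> Prop)
  (F : seq Sigma1 -> Sigma2) :
  regular L1 -> regular L2 -> moore_definable F ->
  (forall t : tree Sigma1, L1 t <-> L2 (Fhat F t)) ->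
  exists d1 d2, da_lang L1 d1 /\ da_lang L2 d2 /\ degree_le d1 d2.
Proof.
move=> R1 R2 [M HM] HL.
have [d1 D1] := da_lang_exists R1.
have [d2 D2] := da_lang_exists R2.
exists d1, d2; split => //; split => //.
have [[B [HB HdB]] _] := D2.
have HA : lang_of (prodA M B) L1.
  move=> t; rewrite HL; exact: (prod_lang HM HB t).
have [dA HdA] := da_exists (prodA M B).
have [_ Hmin] := D1.
apply: (degree_le_trans (Hmin _ _ HA HdA)).
exact: (emb_degree (prod_embeds B HM) HdA HdB).
Qed.
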